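(* Assume (A1) and (A2). Let $\varepsilon_1\ge0$ and let $\beta>\bar\beta_2$ and $\beta>\bar\beta_3$. Then any $x\in\mathcal{C}$ with $\|\nabla g(x)\|\le\varepsilon_1$ is an $(\varepsilon_1,2\varepsilon_1)$-approximate first-order critical point of $\min f(x)$ s.t. $h(x)=0$, namely $$\|h(x)\|\le\frac{\varepsilon_1}{\beta\underline{\sigma}}\le\varepsilon_1\quad\text{and}\quad\|\mathrm{grad}_{\mathcal{M}_x}f(x)\|\le\Big(1+\frac{\overline{C_\lambda}}{\beta\underline{\sigma}}\Big)\varepsilon_1\le2\varepsilon_1,$$ where $\underline{\sigma}\le\min_{x\in\mathcal{C}}\sigma_{\min}(\mathrm{D}h(x))$ is the constant of (A1).
   Context: Let $\mathcal{E}$ be a Euclidean space with inner product $\langle\cdot,\cdot\rangle$ and norm $\|\cdot\|$ (2-norm on $\mathbb{R}^m$), and $f\colon\mathcal{E}\to\mathbb{R}$, $h\colon\mathcal{E}\to\mathbb{R}^m$ be $C^\infty$. $\mathrm{D}h(x)$ is the differential, $\mathrm{D}h(x)^*$ its adjoint, $\sigma_1,\sigma_{\min}=\sigma_m$ the largest and $m$-th singular values. Let $\mathcal{D}=\{x:\operatorname{rank}\mathrm{D}h(x)=m\}$, and for $x\in\mathcal{D}$, $\lambda(x)=(\mathrm{D}h(x)^* )^\dagger[\nabla f(x)]$ (Moore–Penrose), $C^\infty$ on $\mathcal{D}$. Fletcher's augmented Lagrangian: $g(x)=f(x)-\langle h(x),\lambda(x)\rangle+\beta\|h(x)\|^2$,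 $\beta\ge0$. For $x\in\mathcal{D}$, $\mathcal{M}_x=\{y:h(y)=h(x)\}$ and $\mathrm{grad}_{\mathcal{M}_x}f(x)=\nabla f(x)-\mathrm{D}h(x)^*[\lambda(x)]$. (A1): there are $R,\underline{\sigma}>0$ such that every $x\in\mathcal{C}=\{x:\|h(x)\|\le R\}$ satisfies $\sigma_{\min}(\mathrm{D}h(x))\ge\underline{\sigma}$. (A2): $\mathcal{M}=\{x:h(x)=0\}$ and $\mathcal{C}$ are compact. For $x\in\mathcal{C}$: $C_\lambda(x)=\|\mathrm{D}\lambda(x)\|_{\mathrm{op}}$, $\beta_2(x)=C_\lambda(x)/\sigma_{\min}(\mathrm{D}h(x))$, $\beta_3(x)=1/\sigma_{\min}(\mathrm{D}h(x))$; $\overline{C_\lambda}=\max_{x\in\mathcal{C}}C_\lambda(x)$, $\bar\beta_i=\max_{x\in\mathcal{C}}\beta_i(x)$. $x\in\mathcal{D}$ is an $(\varepsilon_0,\varepsilon_1)$-approximate first-order critical point if $\|h(x)\|\le\varepsilon_0$ and $\|\mathrm{grad}_{\mathcal{M}_x}f(x)\|\le\varepsilon_1$. *)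

(* Defs.v *)
From HB Require Import structures.
From mathcomp Require Import all_boot all_order all_algebra.
From mathcomp Require Import all_classical all_reals all_analysis.
Set Implicit Arguments. Unset Strict Implicit. Unset Printing Implicit Defensive.
Import Order.TTheory GRing.Theory Num.Theory.
Import numFieldNormedType.Exports.
Local Open Scope classical_set_scope.
Local Open Scope ring_scope.

(* The Euclidean space E is R^n, represented by row vectors 'rV[R]_n;
   R^m likewise by 'rV[R]_m.  Linear maps act on row vectors on the right. *)

Section Defs.
Variable R : realType.

Definition inner (k : nat) (u v : 'rV[R]_k) : R := \sum_(i < k) u 0 i * v 0 i.
Definition enorm (k : nat) (v : 'rV[R]_k) : R := Num.sqrt (inner v v).

Fixpoint dirn (V W : normedModType R) (vs : seq V) (f : V -> W) : V -> W :=
  match vs with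
  | [::] => f
  | v :: vs' => fun x => derive (dirn vs' f) x v
  end.
Definition Cinf (V W : normedModType R) (f : V -> W) : Prop :=
  forall (vs : seq V) (x : V), differentiable (dirn vs f) x.

Variables n m : nat.

Definition grad (f : 'rV[R]_n -> R) (x : 'rV[R]_n) : 'rV[R]_n :=
  \row_i ('d f x (delta_mx 0 i)).

(* matrix of the differential Dh(x): Dh(x)[v] = v *m jac h x;
   its adjoint Dh(x)^* is w |-> w *m (jac h x)^T *)
Definition jac (h : 'rV[R]_n -> 'rV[R]_m) (x : 'rV[R]_n) : 'M[R]_(n, m) :=
  lin1_mx ('d h x).

(* Moore-Penrose pseudoinverse (the unique matrix satisfying the four
   Penrose conditions; here for maps acting on row vectors on the right) *)
Definition is_MP_pinv (p q : nat) (A : 'M[R]_(p, q)) (P : 'M[R]_(q, p)) : Prop :=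
  [/\ A *m P *m A = A, P *m A *m P = P,
      (A *m P)^T = A *m P & (P *m A)^T = P *m A].
Definition MP_pinv (p q : nat) (A : 'M[R]_(p, q)) : 'M[R]_(q, p) :=
  xget 0 [set P | is_MP_pinv A P].

(* lambda(x) = (Dh(x)^* )^dagger [grad f(x)] *)
Definition lam (f : 'rV[R]_n -> R) (h : 'rV[R]_n -> 'rV[R]_m) (x : 'rV[R]_n)
  : 'rV[R]_m := grad f x *m MP_pinv (jac h x)^T.

Definition gradM (f : 'rV[R]_n -> R) (h : 'rV[R]_n -> 'rV[R]_m) (x : 'rV[R]_n)
  : 'rV[R]_n := grad f x - lam f h x *m (jac h x)^T.

Definition fletcher (f : 'rV[R]_n -> R) (h : 'rV[R]_n -> 'rV[R]_m) (beta : R)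
  (x : 'rV[R]_n) : R :=
  f x - inner (h x) (lam f h x) + beta * enorm (h x) ^+ 2.

(* sigma_min(Dh(x)) = m-th singular value of the linear map
   Dh(x) : R^n -> R^m, i.e. min over unit u in R^m of ||Dh(x)^* u|| *)
Definition sigma_min (J : 'M[R]_(n, m)) : R :=
  inf [set enorm (u *m J^T) | u in [set u : 'rV[R]_m | enorm u = 1]].

Definition opnorm (L : 'rV[R]_n -> 'rV[R]_m) : R :=
  sup [set enorm (L v) | v in [set v : 'rV[R]_n | enorm v <= 1]].

Definition C_lam (f : 'rV[R]_n -> R) (h : 'rV[R]_n -> 'rV[R]_m) (x : 'rV[R]_n)
  : R := opnorm ('d (lam f h) x).

Definition is_max_on (S : set 'rV[R]_n) (phi : 'rV[R]_n -> R) (b : R) : Prop :=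
  (exists2 y, S y & phi y = b) /\ (forall y, S y -> phi y <= b).

(* (eps0, eps1)-approximate first-order critical point (x in D required) *)
Definition approx_fo_crit (f : 'rV[R]_n -> R) (h : 'rV[R]_n -> 'rV[R]_m)
  (eps0 eps1 : R) (x : 'rV[R]_n) : Prop :=
  [/\ \rank (jac h x) = m, enorm (h x) <= eps0 & enorm (gradM f h x) <= eps1].

End Defs.

(* Main.v *)
Require Import Defs.
From HB Require Import structures.
From mathcomp Require Import all_boot all_order all_algebra.
From mathcomp Require Import all_classical all_reals all_analysis.
From mathcomp Require Import ring lra.
Set Implicit Arguments. Unset Strict Implicit. Unset Printing Implicit Defensive.
Import Order.TTheory GRing.Theory Num.Theory.
Import numFieldNormedType.Exports.
Local Open Scope classical_set_scope.
Local Open Scope ring_scope.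




Section Anal.
Context {R : realType} {V : normedModType R}.

Lemma near_eq_diff (W : normedModType R) (f g : V -> W) x :
  (\forall y \near x, f y = g y) -> differentiable g x ->
  differentiable f x /\ 'd f x = 'd g x :> (V -> W).
Proof.
move=> fg dg.
have fxgx : f x = g x by apply: (nbhs_singleton fg).
have key : f \o shift x = cst (f x) + 'd g x +o_ 0 id.
  apply/eqaddoP => e e0.
  have /eqaddoP /(_ e e0) := diff_locally dg.
  have fg0 : \forall h \near (0 : V), f (h + x) = g (h + x).
    move: fg; rewrite (near_shift 0 x) /=; apply: filterS => z /=; rewrite subr0.
    by [].
  apply: filterS2 fg0 => h fgh /=.
  suff -> : (f \o +%R^~ x - (cst (f x) + 'd g x)) h = (g \o +%R^~ x - (cst (g x) + 'd g x)) h by []. by rewrite !fctE /= fgh fxgx.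
have dfe : 'd f x = 'd g x :> (V -> W).
  by apply: diff_unique => //; exact: diff_continuous.
split => //; apply/diff_locallyP; rewrite dfe; split => //.
exact: diff_continuous.
Qed.


Lemma diff_bigsum (W : normedModType R) (I : Type) (r : seq I) (P : pred I)
  (G : I -> V -> W) x :
  (forall i, differentiable (G i) x) ->
  differentiable (fun y => \sum_(i <- r | P i) G i y) x.
Proof.
move=> dG; rewrite -fct_sumE; elim/big_ind: _ => //.
by move=> a b da db; apply: differentiableD.
Qed.

Lemma diff_bigprod (I : Type) (r : seq I) (P : pred I)
  (G : I -> V -> R) x :
  (forall i, differentiable (G i) x) ->
  differentiable (fun y => \prod_(i <- r | P i) G i y) x.
Proof.
move=> dG; rewrite -fct_prodE; elim/big_ind: _ => //.
by move=> a b da db; apply: differentiableM.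
Qed.

Lemma diff_coordF p q (F : V -> 'M[R]_(p, q)) x i j :
  differentiable F x -> differentiable (fun y => F y i j) x.
Proof. by move=> dF; exact: (differentiable_comp dF (differentiable_coord _ i j)). Qed.

Definition mdiff p q (F : V -> 'M[R]_(p, q)) x :=
  forall i j, differentiable (fun y => F y i j) x.

Lemma mdiff_diff p q (F : V -> 'M[R]_(p, q)) x : mdiff F x -> differentiable F x.
Proof.
move=> dF.
have -> : F = (fun y => \sum_(i < p) \sum_(j < q) F y i j *: delta_mx i j).
  by apply/funext => y; rewrite -matrix_sum_delta.
apply: diff_bigsum => i; apply: diff_bigsum => j.
exact: differentiableZl.
Qed.

Lemma diff_mdiff p q (F : V -> 'M[R]_(p, q)) x : differentiable F x -> mdiff F x.
Proof. by move=> dF i j; apply: diff_coordF. Qed.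

Lemma mdiff_mul p q r (F : V -> 'M[R]_(p, q)) (G : V -> 'M[R]_(q, r)) x :
  mdiff F x -> mdiff G x -> mdiff (fun y => F y *m G y) x.
Proof.
move=> dF dG i j; under eq_fun do rewrite mxE.
apply: diff_bigsum => k; exact: differentiableM.
Qed.

Lemma mdiff_tr p q (F : V -> 'M[R]_(p, q)) x :
  mdiff F x -> mdiff (fun y => (F y)^T) x.
Proof. by move=> dF i j; under eq_fun do rewrite mxE; apply: dF. Qed.

Lemma mdiff_scale p q (k : V -> R) (F : V -> 'M[R]_(p, q)) x :
  differentiable k x -> mdiff F x -> mdiff (fun y => k y *: F y) x.
Proof. by move=> dk dF i j; under eq_fun do rewrite mxE; apply: differentiableM. Qed.

Lemma mdiff_det p (F : V -> 'M[R]_p) x :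
  mdiff F x -> differentiable (fun y => \det (F y)) x.
Proof.
move=> dF; apply: diff_bigsum => s.
apply: differentiableM; first exact: differentiable_cst.
apply: diff_bigprod => i; exact: dF.
Qed.

Lemma mdiff_adj p (F : V -> 'M[R]_p) x :
  mdiff F x -> mdiff (fun y => \adj (F y)) x.
Proof.
move=> dF i j; under eq_fun do rewrite mxE.
apply: differentiableM; first exact: differentiable_cst.
apply: mdiff_det => k l; under eq_fun do rewrite !mxE; exact: dF.
Qed.

End Anal.



Section Inner.
Context {R : realType} {k : nat}.
Implicit Types u v w : 'rV[R]_k.

Lemma innerE u v : inner u v = (u *m v^T) 0 0.
Proof. by rewrite /inner mxE; apply: eq_bigr => i _; rewrite mxE. Qed.

Lemma innerC u v : inner u v = inner v u.
Proof. by rewrite /inner; apply: eq_bigr => i _; rewrite mulrC. Qed.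

Lemma innerDl u v w : inner (u + v) w = inner u w + inner v w.
Proof. by rewrite !innerE mulmxDl mxE. Qed.

Lemma innerDr u v w : inner w (u + v) = inner w u + inner w v.
Proof. by rewrite innerC innerDl !(innerC w). Qed.

Lemma innerZl a u v : inner (a *: u) v = a * inner u v.
Proof. by rewrite !innerE -scalemxAl mxE. Qed.

Lemma innerZr a u v : inner u (a *: v) = a * inner u v.
Proof. by rewrite innerC innerZl innerC. Qed.

Lemma innerNl u v : inner (- u) v = - inner u v.
Proof. by rewrite -scaleN1r innerZl mulN1r. Qed.

Lemma innerNr u v : inner u (- v) = - inner u v.
Proof. by rewrite -scaleN1r innerZr mulN1r. Qed.

Lemma innerBl u v w : inner (u - v) w = inner u w - inner v w.
Proof. by rewrite innerDl innerNl. Qed.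

Lemma innerBr u v w : inner w (u - v) = inner w u - inner w v.
Proof. by rewrite innerDr innerNr. Qed.

Lemma inner0l v : inner 0 v = 0.
Proof. by rewrite /inner big1 // => i _; rewrite mxE mul0r. Qed.

Lemma inner0r v : inner v 0 = 0.
Proof. by rewrite innerC inner0l. Qed.


Lemma inner_delta i u : inner (delta_mx 0 i) u = u 0 i.
Proof.
rewrite /inner (bigD1 i) //= big1 ?addr0; first by rewrite mxE !eqxx mul1r.
by move=> j ji; rewrite mxE eqxx /= (negbTE ji) mul0r.
Qed.

Lemma inner_ge0 v : 0 <= inner v v.
Proof. by apply: sumr_ge0 => i _; rewrite -expr2 sqr_ge0. Qed.

Lemma inner_eq0 v : inner v v = 0 -> v = 0.
Proof.
move=> /eqP; rewrite /inner psumr_eq0; last by move=> i _; rewrite -expr2 sqr_ge0.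
move=> /allP H; apply/rowP => i; rewrite mxE.
have := H i (mem_index_enum i); rewrite /= -expr2 sqrf_eq0.
by move/eqP.
Qed.

Lemma enorm_ge0 v : 0 <= enorm v.
Proof. exact: sqrtr_ge0. Qed.

Lemma enorm_sq v : enorm v ^+ 2 = inner v v.
Proof. by rewrite /enorm sqr_sqrtr // inner_ge0. Qed.

Lemma enorm0 : enorm (0 : 'rV[R]_k) = 0.
Proof. by rewrite /enorm inner0l sqrtr0. Qed.

Lemma enorm_eq0 v : enorm v = 0 -> v = 0.
Proof. by move=> H; apply: inner_eq0; rewrite -enorm_sq H expr0n. Qed.

Lemma enormZ a v : enorm (a *: v) = `|a| * enorm v.
Proof.
rewrite /enorm innerZl innerZr mulrA -expr2 sqrtrM ?sqr_ge0 //.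
by rewrite sqrtr_sqr.
Qed.

Lemma enormN v : enorm (- v) = enorm v.
Proof. by rewrite -scaleN1r enormZ normrN normr1 mul1r. Qed.

Lemma CS_sq u v : inner u v ^+ 2 <= inner u u * inner v v.
Proof.
have [v0|] := eqVneq (inner v v) 0.
  by rewrite (inner_eq0 v0) inner0r inner0l expr0n /= mulr0.
move=> cn0.
have c0 : 0 < inner v v by rewrite lt_def cn0 inner_ge0.
have := inner_ge0 (inner v v *: u - inner u v *: v).
rewrite !innerBl !innerBr !innerZl !innerZr (innerC v u).
set a := inner u u; set b := inner u v; set c := inner v v => H.
have : 0 <= c * (a * c - b ^+ 2) by nra.
by rewrite pmulr_rge0 // subr_ge0 mulrC.
Qed.

Lemma CS u v : inner u v <= enorm u * enorm v.
Proof.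
apply: (le_trans (ler_norm _)).
rewrite -sqrtr_sqr /enorm -sqrtrM ?inner_ge0 //.
by rewrite ler_sqrt ?CS_sq // mulr_ge0 // inner_ge0.
Qed.

Lemma enormD u v : enorm (u + v) <= enorm u + enorm v.
Proof.
rewrite -(@ler_pXn2r _ 2) ?nnegrE ?addr_ge0 ?enorm_ge0 //.
rewrite enorm_sq innerDl !innerDr (innerC v u) sqrrD !enorm_sq.
have := CS u v; lra.
Qed.

Lemma enorm_coord v i : `|v 0 i| <= enorm v.
Proof.
rewrite -sqrtr_sqr /enorm ler_sqrt ?inner_ge0 // /inner (bigD1 i) //= -expr2.
by rewrite lerDl; apply: sumr_ge0 => j _; rewrite -expr2 sqr_ge0.
Qed.

End Inner.

Lemma enorm_sum {R : realType} {k : nat} (I : Type) (r : seq I) (P : pred I) (F : I -> 'rV[R]_k) :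
  enorm (\sum_(i <- r | P i) F i) <= \sum_(i <- r | P i) enorm (F i).
Proof.
elim/big_ind2: _ => //; first by rewrite enorm0.
by move=> a b c d H1 H2; apply: (le_trans (enormD _ _)); apply: lerD.
Qed.

Lemma inner_mulmx {R : realType} {k p : nat} (u : 'rV[R]_k) (B : 'M[R]_(k, p)) (z : 'rV[R]_p) :
  inner (u *m B) z = inner u (z *m B^T).
Proof. by rewrite !innerE trmx_mul trmxK mulmxA. Qed.

Section Bounds.
Context {R : realType} {n m : nat}.

Lemma sigma_min_lb (J : 'M[R]_(n, m)) (u : 'rV[R]_m) :
  sigma_min J * enorm u <= enorm (u *m J^T).
Proof.
have [->|u0] := eqVneq u 0.
  by rewrite enorm0 mulr0 enorm_ge0.
have t0 : 0 < enorm u.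
  rewrite lt_def enorm_ge0 andbT; apply/eqP => /enorm_eq0 H; by rewrite H eqxx in u0.
have lb : has_lbound [set enorm (u *m J^T) | u in [set u : 'rV[R]_m | enorm u = 1]].
  by exists 0 => y [w _ <-]; apply: enorm_ge0.
have := ge_inf lb (_ : [set enorm (u *m J^T) | u in [set u : 'rV[R]_m | enorm u = 1]] (enorm (((enorm u)^-1 *: u) *m J^T))).
rewrite -/(sigma_min J) -scalemxAl enormZ ger0_norm ?invr_ge0 ?enorm_ge0 //.
move=> /(_ _) H; rewrite -ler_pdivlMr //. rewrite mulrC; apply: H.
exists ((enorm u)^-1 *: u) => //=.
by rewrite enormZ ger0_norm ?invr_ge0 ?enorm_ge0 // mulVf // gt_eqF.
by rewrite -scalemxAl enormZ ger0_norm ?invr_ge0 ?enorm_ge0.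
Qed.

Lemma opnorm_has_ub (L : {linear 'rV[R]_n -> 'rV[R]_m}) :
  has_ubound [set enorm (L v) | v in [set v : 'rV[R]_n | enorm v <= 1]].
Proof.
exists (\sum_(i < n) enorm (L (delta_mx 0 i))) => y [v /= v1 <-].
rewrite {1}(row_sum_delta v) linear_sum /=.
apply: (le_trans (enorm_sum _ _ _)); apply: ler_sum => i _.
rewrite linearZ /= enormZ -[X in _ <= X]mul1r ler_wpM2r ?enorm_ge0 //.
exact: le_trans (enorm_coord _ _) v1.
Qed.

Lemma opnorm_ge0 (L : {linear 'rV[R]_n -> 'rV[R]_m}) : 0 <= opnorm L.
Proof.
have := ub_le_sup (opnorm_has_ub L) (_ : _ (enorm (L 0))).
rewrite linear0 enorm0; apply.
by exists 0; rewrite /= ?enorm0 ?ler01 // raddf0 enorm0.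
Qed.

Lemma opnorm_ub (L : {linear 'rV[R]_n -> 'rV[R]_m}) v :
  enorm (L v) <= opnorm L * enorm v.
Proof.
have [->|v0] := eqVneq v 0.
  by rewrite raddf0 !enorm0 mulr0.
have t0 : 0 < enorm v.
  rewrite lt_def enorm_ge0 andbT; apply/eqP => /enorm_eq0 H; by rewrite H eqxx in v0.
have := ub_le_sup (opnorm_has_ub L) (_ : _ (enorm (L ((enorm v)^-1 *: v)))).
rewrite linearZ /= enormZ ger0_norm ?invr_ge0 ?enorm_ge0 // => H.
rewrite -ler_pdivrMr // mulrC; apply: H.
exists ((enorm v)^-1 *: v) => //=.
by rewrite enormZ ger0_norm ?invr_ge0 ?enorm_ge0 // mulVf // gt_eqF.
by rewrite linearZ /= enormZ ger0_norm ?invr_ge0 ?enorm_ge0.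
Qed.

End Bounds.



Section MP.
Context {R : realType}.

Lemma MP_unique p q (A : 'M[R]_(p, q)) P Q :
  is_MP_pinv A P -> is_MP_pinv A Q -> P = Q.
Proof.
case=> [P1 P2 P3 P4] [Q1 Q2 Q3 Q4].
have S1 : P = P *m P^T *m A^T.
  by rewrite -mulmxA -trmx_mul P3 mulmxA P2.
have S2 : A^T = A^T *m (A *m Q).
  by rewrite -Q3 -trmx_mul Q1.
have S3 : Q = A^T *m Q^T *m Q.
  by rewrite -trmx_mul Q4 Q2.
have S4 : A^T = P *m A *m A^T.
  by rewrite -P4 -trmx_mul mulmxA P1.
have E1 : P = P *m A *m Q.
  rewrite {1}S1 S2.
  have -> : P *m P^T *m (A^T *m (A *m Q)) = P *m (P^T *m A^T) *m (A *m Q) by rewrite !mulmxA.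
  by rewrite -trmx_mul P3 (mulmxA P A P) P2 mulmxA.
have E2 : Q = P *m A *m Q.
  rewrite {1}S3 S4.
  have -> : P *m A *m A^T *m Q^T *m Q = P *m A *m (A^T *m Q^T) *m Q by rewrite !mulmxA.
  by rewrite -trmx_mul Q4 -(mulmxA _ (Q *m A) Q) Q2.
by rewrite E1 -E2.
Qed.


Lemma MP_formula n m (J : 'M[R]_(n, m)) :
  J^T *m J \in unitmx -> MP_pinv (J^T) = J *m invmx (J^T *m J).
Proof.
move=> U.
set P := J *m invmx (J^T *m J).
have AP : J^T *m P = 1%:M by rewrite /P mulmxA mulmxV.
have HP : is_MP_pinv (J^T) P.
  split.
  - by rewrite AP mul1mx.
  - by rewrite -mulmxA AP mulmx1.
  - by rewrite AP trmx1.
  - rewrite /P !trmx_mul trmxK trmx_inv trmx_mul trmxK.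
    by rewrite mulmxA.
apply: (@MP_unique _ _ (J^T) _ P) => //.
rewrite /MP_pinv; apply: (@xgetPex _ 0 [set P | is_MP_pinv (J^T) P]).
by exists P.
Qed.

End MP.



Section Inner_diff.
Context {R : realType} {V : normedModType R} {k : nat}.

Lemma diff_inner (F G : V -> 'rV[R]_k) x :
  differentiable F x -> differentiable G x ->
  differentiable (fun y => inner (F y) (G y)) x.
Proof.
move=> dF dG; apply: diff_bigsum => i.
by apply: differentiableM; apply: diff_coordF.
Qed.

Lemma derive_coord p q (F : V -> 'M[R]_(p, q)) x v i j :
  differentiable F x ->
  'D_v (fun y => F y i j) x = 'D_v F x i j.
Proof.
move=> dF; rewrite (derive_mx (@diff_derivable _ _ _ _ _ v dF)) mxE //.
Qed.

Lemma derive_inner (F G : V -> 'rV[R]_k) x v :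
  differentiable F x -> differentiable G x ->
  'D_v (fun y => inner (F y) (G y)) x =
  inner ('D_v F x) (G x) + inner (F x) ('D_v G x).
Proof.
move=> dF dG.
have dFi i : differentiable (fun y => F y 0 i) x by apply: diff_coordF.
have dGi i : differentiable (fun y => G y 0 i) x by apply: diff_coordF.
have -> : (fun y => inner (F y) (G y)) =
          \sum_(i < k) ((fun y => F y 0 i) * (fun y => G y 0 i)).
  by rewrite fct_sumE; apply/funext => y.
rewrite derive_sum; last first.
  by move=> i; apply: diff_derivable; apply: differentiableM.
rewrite /inner -big_split /=; apply: eq_bigr => i _.
rewrite deriveM; try by apply: diff_derivable.
rewrite !derive_coord //. rewrite addrC; congr (_ + _); rewrite mulrC //.
Qed.

End Inner_diff.



Section Main.
Context {R : realType} {n m : nat} (f : 'rV[R]_n -> R) (h : 'rV[R]_n -> 'rV[R]_m)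
  (Cf : Cinf f) (Ch : Cinf h).

Lemma df y : differentiable f y.
Proof. exact: (Cf [::] y). Qed.

Lemma dh y : differentiable h y.
Proof. exact: (Ch [::] y). Qed.

Lemma ddf v y : differentiable (fun z => 'd f z v) y.
Proof.
have -> : (fun z => 'd f z v) = (fun z => derive f z v).
  by apply/funext => z; rewrite deriveE //; apply: df.
exact: (Cf [:: v] y).
Qed.

Lemma ddh v y : differentiable (fun z => 'd h z v) y.
Proof.
have -> : (fun z => 'd h z v) = (fun z => derive h z v).
  by apply/funext => z; rewrite deriveE //; apply: dh.
exact: (Ch [:: v] y).
Qed.

Lemma mdiff_grad y : mdiff (grad f) y.
Proof.
move=> i j; have -> : (fun z => grad f z i j) = (fun z => 'd f z (delta_mx 0 j)).
  by apply/funext => z; rewrite mxE.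
exact: ddf.
Qed.

Lemma mdiff_jac y : mdiff (jac h) y.
Proof.
move=> i j; have -> : (fun z => jac h z i j) = (fun z => 'd h z (delta_mx 0 i) 0 j).
  by apply/funext => z; rewrite mxE.
apply: diff_coordF; exact: ddh.
Qed.

Definition Mx z := (jac h z)^T *m jac h z.
Definition lam' z := grad f z *m (jac h z *m ((\det (Mx z))^-1 *: \adj (Mx z))).

Lemma diff_lam x : \det (Mx x) != 0 -> differentiable (lam f h) x.
Proof.
move=> H.
have dM : mdiff Mx x := mdiff_mul (mdiff_tr (mdiff_jac x)) (mdiff_jac x).
have ddet := mdiff_det dM.
have dlam' : differentiable lam' x.
  apply: mdiff_diff; apply: mdiff_mul; first exact: mdiff_grad.
  apply: mdiff_mul; first exact: mdiff_jac.
  apply: mdiff_scale; first exact: differentiableV.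
  exact: mdiff_adj.
have nr : \forall z \near x, lam f h z = lam' z.
  have := cvgr_neq0 _ (differentiable_continuous ddet) H.
  move=> nb; near=> z.
  have U : Mx z \in unitmx by rewrite unitmxE unitfE; near: z; apply: nb.
  by rewrite /lam MP_formula // /invmx U.
exact: (near_eq_diff nr dlam').1.
Unshelve. all: by end_near. Qed.


Lemma grad_g x beta : \det (Mx x) != 0 ->
  grad (fletcher f h beta) x = gradM f h x + (2 * beta) *: (h x *m (jac h x)^T)
     - \row_i inner (h x) ('d (lam f h) x (delta_mx 0 i)).
Proof.
move=> H.
set L := lam f h.
have dL : differentiable L x by exact: diff_lam.
have Eg : fletcher f h beta =
   (f - (fun y => inner (h y) (L y))) + beta *: (fun y => inner (h y) (h y)).
  by apply/funext => y; rewrite /fletcher enorm_sq.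
have dI : differentiable (fun y => inner (h y) (L y)) x by apply: diff_inner => //; apply: dh.
have dII : differentiable (fun y => inner (h y) (h y)) x by apply: diff_inner; apply: dh.
have dg : differentiable (fletcher f h beta) x.
  rewrite Eg; apply: differentiableD; last exact: differentiableZ.
  apply: differentiableB => //; exact: df.
apply/rowP => i; rewrite [LHS]mxE -deriveE // Eg.
have dfx := df x; have dhx := dh x.
rewrite deriveD; last 2 first.
- by apply: diff_derivable; apply: differentiableB.
- by apply: diff_derivable; apply: differentiableZ.
rewrite deriveB; last 2 first.
- by apply: diff_derivable.
- by apply: diff_derivable.
rewrite deriveZ; last by apply: diff_derivable.
rewrite !derive_inner //.
rewrite (deriveE _ dfx) (deriveEjacobian _ dhx) (deriveE _ dL).
rewrite (_ : jacobian h x = jac h x) //.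
rewrite (innerC (h x) (delta_mx 0 i *m jac h x)) !inner_mulmx !inner_delta.
rewrite /gradM !mxE -/L.
set a := \sum_j _; set b := \sum_j _; set c := inner _ _.
rewrite -[beta *: _]/(beta * _).
ring.
Qed.

End Main.



Lemma inner_sumr {R : realType} {k : nat} (u : 'rV[R]_k) (I : Type) (r : seq I) (P : pred I) (F : I -> 'rV[R]_k) :
  inner u (\sum_(i <- r | P i) F i) = \sum_(i <- r | P i) inner u (F i).
Proof.
elim/big_rec2: _; first by rewrite inner0r.
by move=> i y1 y2 _ <-; rewrite innerDr.
Qed.

Unset Implicit Arguments.

Theorem mainTheorem3 (R : realType) (n m : nat)
  (f : 'rV[R]_n -> R) (h : 'rV[R]_n -> 'rV[R]_m)
  (Cf : Cinf f) (Ch : Cinf h)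
  (Rc sigl : R) (Rc_gt0 : 0 < Rc) (sigl_gt0 : 0 < sigl)
  (* (A1) with constants Rc, sigl *)
  (A1 : forall y, enorm (h y) <= Rc -> sigl <= sigma_min (jac h y))
  (* (A2) *)
  (A2M : compact [set y | h y = 0])
  (A2C : compact [set y | enorm (h y) <= Rc])
  (Cbar bbar2 bbar3 : R)
  (HCbar : is_max_on [set y | enorm (h y) <= Rc] (C_lam f h) Cbar)
  (Hbbar2 : is_max_on [set y | enorm (h y) <= Rc]
              (fun y => C_lam f h y / sigma_min (jac h y)) bbar2)
  (Hbbar3 : is_max_on [set y | enorm (h y) <= Rc]
              (fun y => (sigma_min (jac h y))^-1) bbar3)
  (eps1 beta : R) (eps1_ge0 : 0 <= eps1)
  (beta_gt2 : bbar2 < beta) (beta_gt3 : bbar3 < beta)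
  (x : 'rV[R]_n) (xC : enorm (h x) <= Rc)
  (Hg : enorm (grad (fletcher f h beta) x) <= eps1) :
  approx_fo_crit f h eps1 (2 * eps1) x
  /\ enorm (h x) <= eps1 / (beta * sigl)
  /\ enorm (gradM f h x) <= (1 + Cbar / (beta * sigl)) * eps1.
Proof.
set J := jac h x.
set s := sigma_min J.
set C := C_lam f h x.
have sls : sigl <= s by exact: A1.
have s0 : 0 < s by exact: lt_le_trans sls.
have inj : forall u : 'rV[R]_m, u *m J^T = 0 -> u = 0.
  move=> u Hu; have := sigma_min_lb J u; rewrite -/s Hu enorm0 => H.
  apply: enorm_eq0; apply/eqP; rewrite eq_le enorm_ge0 andbT.
  by rewrite -(pmulr_rle0 _ s0).
have U : J^T *m J \in unitmx.
  rewrite unitmxE unitfE; apply/negP => /det0P [v v0 Hv].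
  have : inner (v *m J^T) (v *m J^T) = 0.
    by rewrite inner_mulmx trmxK -mulmxA Hv inner0r.
  by move=> /inner_eq0 /inj Hv0; rewrite Hv0 eqxx in v0.
have Hdet : \det (Mx h x) != 0 by rewrite -unitfE -unitmxE.
have rk : \rank J = m.
  rewrite -mxrank_tr; apply/eqP; apply/row_freeP.
  by exists (J *m invmx (J^T *m J)); rewrite mulmxA mulmxV.
set L := lam f h.
set a := gradM f h x.
set b := h x *m J^T.
set c := \row_i inner (h x) ('d L x (delta_mx 0 i)).
have HG : grad (fletcher f h beta) x = a + (2 * beta) *: b - c.
  exact: (grad_g Cf Ch beta Hdet).
have aJ : a *m J = 0.
  rewrite /a /gradM /lam MP_formula // -/J mulmxBl -!mulmxA mulVmx // mulmx1.
  by rewrite subrr.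
have orth : inner a b = 0 by rewrite /b -inner_mulmx aJ inner0l.
have Hc : forall v, inner c v = inner (h x) ('d L x v).
  move=> v; rewrite {2}(row_sum_delta v) linear_sum inner_sumr {1}/inner.
  by apply: eq_bigr => i _; rewrite mxE linearZ innerZr mulrC.
have C0 : 0 <= C by apply: opnorm_ge0.
have Hec : enorm c <= C * enorm (h x).
  have H1 : enorm c ^+ 2 <= enorm (h x) * (C * enorm c).
    rewrite enorm_sq Hc; apply: le_trans (CS _ _) _.
    apply: (@le_trans _ _ (enorm (h x) * (C * enorm c))); last by rewrite le_eqVlt; apply/orP; left; apply/eqP; ring.
    apply: ler_wpM2l; [exact: enorm_ge0 | exact: opnorm_ub].
  have [c0|c0] := eqVneq (enorm c) 0; first by rewrite c0 mulr_ge0 // enorm_ge0.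
  have cp : 0 < enorm c by rewrite lt_def c0 enorm_ge0.
  by rewrite -(ler_pM2r cp) -expr2 (le_trans H1) // le_eqVlt; apply/orP; left; apply/eqP; ring.
have HC := HCbar.2 x xC.
have H2 : C / s <= bbar2 := Hbbar2.2 x xC.
have H3 : s^-1 <= bbar3 := Hbbar3.2 x xC.
have Cs : C < beta * s by rewrite -ltr_pdivrMr // (le_lt_trans H2).
have bs1 : 1 < beta * s by rewrite -ltr_pdivrMr // div1r (le_lt_trans H3).
have beta0 : 0 < beta.
  by have := lt_trans ltr01 bs1; rewrite pmulr_lgt0.
have Hb : s * enorm (h x) <= enorm b := sigma_min_lb J (h x).
rewrite HG in Hg.
set G := a + (2 * beta) *: b - c.
have K1 : 2 * beta * enorm b ^+ 2 <= (eps1 + C * enorm (h x)) * enorm b.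
  have E : 2 * beta * enorm b ^+ 2 = inner G b + inner c b.
    rewrite /G innerBl innerDl innerZl orth enorm_sq; ring.
  rewrite E; have := CS G b; have := CS c b.
  have := enorm_ge0 b; have := enorm_ge0 c; have := enorm_ge0 G; have := enorm_ge0 (h x).
  nra.
have K2 : enorm a ^+ 2 <= (eps1 + C * enorm (h x)) * enorm a.
  have E : enorm a ^+ 2 = inner a G + inner a c.
    rewrite enorm_sq /G !innerDr innerNr innerZr orth; ring.
  rewrite E; have := CS a G; have := CS a c.
  have := enorm_ge0 a; have := enorm_ge0 c; have := enorm_ge0 G; have := enorm_ge0 (h x).
  nra.
have eh0 := enorm_ge0 (h x).
have hb : beta * s * enorm (h x) <= eps1.
  have [b0|b0] := eqVneq (enorm b) 0.
    have : s * enorm (h x) <= 0 by rewrite -b0.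
    rewrite pmulr_rle0 // => ehle.
    have -> : enorm (h x) = 0 by apply/eqP; rewrite eq_le ehle eh0.
    by rewrite mulr0.
  have bp : 0 < enorm b by rewrite lt_def b0 enorm_ge0.
  have K1' : 2 * beta * enorm b <= eps1 + C * enorm (h x).
    rewrite -(ler_pM2r bp); move: K1; rewrite expr2 mulrA //.
  have : C * enorm (h x) <= beta * s * enorm (h x) by apply: ler_wpM2r => //; apply: ltW.
  have : beta * (s * enorm (h x)) <= beta * enorm b by apply: ler_wpM2l => //; apply: ltW.
  lra.
have ha : enorm a <= eps1 + C * enorm (h x).
  have [a0|a0] := eqVneq (enorm a) 0.
    by rewrite a0; apply: addr_ge0 => //; apply: mulr_ge0.
  have ap : 0 < enorm a by rewrite lt_def a0 enorm_ge0.
  by rewrite -(ler_pM2r ap) -expr2.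
have sigb : 0 < beta * sigl by apply: mulr_gt0.
have hs : beta * sigl * enorm (h x) <= eps1.
  refine (le_trans _ hb); apply: ler_wpM2r => //; apply: ler_wpM2l => //; exact: ltW beta0.
have hle : enorm (h x) <= eps1 / (beta * sigl) by rewrite ler_pdivlMr //; move: hs; rewrite mulrC.
have Chh : C * enorm (h x) <= Cbar * (eps1 / (beta * sigl)).
  apply: le_trans (_ : C * (eps1 / (beta * sigl)) <= _).
    by apply: ler_wpM2l.
  apply: ler_wpM2r => //; apply: divr_ge0 => //; exact: ltW sigb.
have Ch2 : C * enorm (h x) <= eps1.
  refine (le_trans _ hb); apply: ler_wpM2r => //; exact: ltW Cs.
split; last split => //.
- split => //.
  + refine (le_trans _ hb); rewrite -[X in X <= _]mul1r; apply: ler_wpM2r => //; exact: ltW bs1.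
  + lra.
- rewrite mulrDl mul1r mulrAC -mulrA [eps1 / _]mulrC.
  apply: le_trans ha _; apply: lerD => //.
  by rewrite mulrC.
Qed.
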